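(* Let $h$ be an isometry of the $E_8$ lattice of order $5$ which does not have $1$ as an eigenvalue. Then the lattice $(h-1)E_8$ is rootless.
   Context: $E_8$ is the $E_8$ root lattice; rootless means containing no vectors of norm $2$. *)

(* Defs.v *)
From HB Require Import structures.
From mathcomp Require Import all_boot all_order all_algebra.
Set Implicit Arguments. Unset Strict Implicit. Unset Printing Implicit Defensive.
Import Order.TTheory GRing.Theory Num.Theory.
Local Open Scope ring_scope.

(* The E8 root lattice, presented as Z^8 (row vectors of integer coordinates
   with respect to a basis of simple roots) together with the Gram matrix of
   that basis, i.e. the Cartan matrix of E8.  Dynkin diagram (0-based):
   0 - 1 - 2 - 3 - 4 - 5 - 6, with node 7 attached to node 4. *)
Definition E8_adj (i j : 'I_8) : bool :=
  ((i.+1 == j :> nat) && (j < 7)%N) || ((j.+1 == i :> nat) && (i < 7)%N)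
  || ((i == 4 :> nat) && (j == 7 :> nat)) || ((i == 7 :> nat) && (j == 4 :> nat)).

Definition E8_gram : 'M[int]_8 :=
  \matrix_(i, j) (if i == j then 2 else if E8_adj i j then -1 else 0).

Definition E8_form (u v : 'rV[int]_8) : int := (u *m E8_gram *m v^T) 0 0.
Definition E8_norm (v : 'rV[int]_8) : int := E8_form v v.

(* An isometry of E8: a Z-linear map v |-> v *m h of the lattice preserving
   the form.  (Such h is automatically invertible over Z, since
   det(h)^2 = 1.) *)
Definition E8_isometry (h : 'M[int]_8) : Prop :=
  forall u v : 'rV[int]_8, E8_form (u *m h) (v *m h) = E8_form u v.

Definition rootless (L : 'rV[int]_8 -> Prop) : Prop :=
  forall v, L v -> E8_norm v != 2.

Definition image_hm1 (h : 'M[int]_8) (v : 'rV[int]_8) : Prop :=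
  exists u : 'rV[int]_8, v = u *m (h - 1).

(* Main.v *)
Require Import Defs.
From HB Require Import structures.
From mathcomp Require Import all_boot all_order all_algebra.
From mathcomp Require Import ring lra zify.
Import Order.TTheory GRing.Theory Num.Theory.
Local Open Scope ring_scope.

Definition Q (a0 a1 a2 a3 a4 a5 a6 a7 : int) : int :=
  2 * (a0 ^+ 2 + a1 ^+ 2 + a2 ^+ 2 + a3 ^+ 2 + a4 ^+ 2 + a5 ^+ 2 + a6 ^+ 2 + a7 ^+ 2)
  - 2 * (a0 * a1 + a1 * a2 + a2 * a3 + a3 * a4 + a4 * a5 + a5 * a6 + a4 * a7).

Lemma Q60 a0 a1 a2 a3 a4 a5 a6 a7 : 60 * Q a0 a1 a2 a3 a4 a5 a6 a7 =
  30 * (2*a0-a1)^+2 + 10*(3*a1-2*a2)^+2 + 5*(4*a2-3*a3)^+2 + 3*(5*a3-4*a4)^+2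
  + 30*(2*a6-a5)^+2 + 10*(3*a5-2*a4)^+2 + 30*(2*a7-a4)^+2 + 2*a4^+2.
Proof. rewrite /Q; ring. Qed.

Lemma lin8 {s1 s2 s3 s4 s5 s6 s7 s8 q : int} :
  0 <= s1 -> 0 <= s2 -> 0 <= s3 -> 0 <= s4 -> 0 <= s5 -> 0 <= s6 -> 0 <= s7 -> 0 <= s8 ->
  60 * q = 30 * s1 + 10 * s2 + 5 * s3 + 3 * s4 + 30 * s5 + 10 * s6 + 30 * s7 + 2 * s8 ->
  0 <= q /\ (q = 0 -> s1 = 0 /\ s2 = 0 /\ s3 = 0 /\ s4 = 0 /\ s5 = 0 /\ s6 = 0 /\ s7 = 0 /\ s8 = 0).
Proof. lia. Qed.

Lemma Qlin (a0 a1 a2 a3 a4 a5 a6 a7 : int) : 0 <= Q a0 a1 a2 a3 a4 a5 a6 a7 /\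
  (Q a0 a1 a2 a3 a4 a5 a6 a7 = 0 -> (2*a0-a1)^+2 = 0 /\ (3*a1-2*a2)^+2 = 0 /\
  (4*a2-3*a3)^+2 = 0 /\ (5*a3-4*a4)^+2 = 0 /\ (2*a6-a5)^+2 = 0 /\ (3*a5-2*a4)^+2 = 0 /\
  (2*a7-a4)^+2 = 0 /\ a4^+2 = 0).
Proof.
have H := (lin8 (sqr_ge0 (2*a0-a1)) (sqr_ge0 (3*a1-2*a2))
  (sqr_ge0 (4*a2-3*a3)) (sqr_ge0 (5*a3-4*a4)) (sqr_ge0 (2*a6-a5)) (sqr_ge0 (3*a5-2*a4))
  (sqr_ge0 (2*a7-a4)) (sqr_ge0 a4) (Q60 a0 a1 a2 a3 a4 a5 a6 a7)). exact: H.
Qed.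

Lemma Q_ge0 a0 a1 a2 a3 a4 a5 a6 a7 : 0 <= Q a0 a1 a2 a3 a4 a5 a6 a7.
Proof. exact: (Qlin a0 a1 a2 a3 a4 a5 a6 a7).1. Qed.

Lemma sq0 (y : int) : y ^+ 2 = 0 -> y = 0.
Proof. by move/eqP; rewrite sqrf_eq0 => /eqP. Qed.

Lemma Q_eq0 a0 a1 a2 a3 a4 a5 a6 a7 : Q a0 a1 a2 a3 a4 a5 a6 a7 = 0 ->
  (a0 = 0 /\ a1 = 0 /\ a2 = 0 /\ a3 = 0 /\ a4 = 0 /\ a5 = 0 /\ a6 = 0 /\ a7 = 0).
Proof.
move=> H0; have [_ /(_ H0)] := Qlin a0 a1 a2 a3 a4 a5 a6 a7.
move=> [/sq0 e1 [/sq0 e2 [/sq0 e3 [/sq0 e4 [/sq0 e5 [/sq0 e6 [/sq0 e7 /sq0 e8]]]]]]].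
lia.
Qed.

Lemma normE (x : 'rV[int]_8) : E8_norm x =
  Q (x 0 (inord 0)) (x 0 (inord 1)) (x 0 (inord 2)) (x 0 (inord 3))
    (x 0 (inord 4)) (x 0 (inord 5)) (x 0 (inord 6)) (x 0 (inord 7)).
Proof.
rewrite /E8_norm /E8_form !mxE.
rewrite !big_ord_recl big_ord0 /=.
rewrite !mxE !big_ord_recl !big_ord0 /=.
rewrite !mxE /=.
have -> : (inord 0 : 'I_8) = ord0 by apply/val_inj; rewrite /= inordK.
have -> : (inord 1 : 'I_8) = lift ord0 ord0 by apply/val_inj; rewrite /= inordK.
have -> : (inord 2 : 'I_8) = lift ord0 (lift ord0 ord0) by apply/val_inj; rewrite /= inordK.
have -> : (inord 3 : 'I_8) = lift ord0 (lift ord0 (lift ord0 ord0)) by apply/val_inj; rewrite /= inordK.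
have -> : (inord 4 : 'I_8) = lift ord0 (lift ord0 (lift ord0 (lift ord0 ord0))) by apply/val_inj; rewrite /= inordK.
have -> : (inord 5 : 'I_8) = lift ord0 (lift ord0 (lift ord0 (lift ord0 (lift ord0 ord0)))) by apply/val_inj; rewrite /= inordK.
have -> : (inord 6 : 'I_8) = lift ord0 (lift ord0 (lift ord0 (lift ord0 (lift ord0 (lift ord0 ord0))))) by apply/val_inj; rewrite /= inordK.
have -> : (inord 7 : 'I_8) = lift ord0 (lift ord0 (lift ord0 (lift ord0 (lift ord0 (lift ord0 (lift ord0 ord0)))))) by apply/val_inj; rewrite /= inordK.
move: (x 0 ord0) (x 0 (lift ord0 ord0)) (x 0 (lift ord0 (lift ord0 ord0))) (x 0 (lift ord0 (lift ord0 (lift ord0 ord0)))) (x 0 (lift ord0 (lift ord0 (lift ord0 (lift ord0 ord0))))) (x 0 (lift ord0 (lift ord0 (lift ord0 (lift ord0 (lift ord0 ord0)))))) (x 0 (lift ord0 (lift ord0 (lift ord0 (lift ord0 (lift ord0 (lift ord0 ord0))))))) (x 0 (lift ord0 (lift ord0 (lift ord0 (lift ord0 (lift ord0 (lift ord0 (lift ord0 ord0)))))))) => a0 a1 a2 a3 a4 a5 a6 a7.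
rewrite /Q; ring.
Qed.


Lemma eformDl a b c : E8_form (a + b) c = E8_form a c + E8_form b c.
Proof. by rewrite /E8_form !mulmxDl mxE. Qed.
Lemma eformNl a c : E8_form (- a) c = - E8_form a c.
Proof. by rewrite /E8_form !mulNmx mxE. Qed.
Lemma eformDr a b c : E8_form a (b + c) = E8_form a b + E8_form a c.
Proof. by rewrite /E8_form linearD mulmxDr mxE. Qed.
Lemma eformNr a c : E8_form a (- c) = - E8_form a c.
Proof. by rewrite /E8_form linearN mulmxN mxE. Qed.
Lemma eform0l c : E8_form 0 c = 0.
Proof. by rewrite /E8_form !mul0mx mxE. Qed.

Lemma adjC (i j : 'I_8) : E8_adj i j = E8_adj j i.
Proof.
by case: i => [[|[|[|[|[|[|[|[|//]]]]]]]] ?]; case: j => [[|[|[|[|[|[|[|[|//]]]]]]]] ?].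
Qed.

Lemma gramT : E8_gram^T = E8_gram.
Proof. by apply/matrixP => i j; rewrite !mxE eq_sym adjC. Qed.

Lemma eformC a b : E8_form a b = E8_form b a.
Proof.
rewrite /E8_form; transitivity ((a *m E8_gram *m b^T)^T 0 0); first by rewrite [RHS]mxE.
by rewrite !trmx_mul trmxK gramT mulmxA.
Qed.

Lemma fix0 (h : 'M[int]_8) : ~~ eigenvalue (map_mx (intr : int -> rat) h) 1 ->
  forall w : 'rV[int]_8, w *m h = w -> w = 0.
Proof.
move=> He w Hw; apply/eqP; apply/negPn/negP => Hw0.
move/negP: He; apply; apply/eigenvalueP; exists (map_mx intr w).
  by rewrite -map_mxM Hw scale1r.
apply: contra Hw0 => /eqP/matrixP Hm; apply/eqP/matrixP => i j.
by have := Hm i j; rewrite !mxE => /eqP; rewrite intr_eq0 => /eqP.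
Qed.

Lemma pS (u : 'rV[int]_8) (h : 'M[int]_8) k : u *m h ^+ k.+1 = (u *m h ^+ k) *m h.
Proof. by rewrite exprSr -mulmxE mulmxA. Qed.



Lemma norm_ge0 x : 0 <= E8_norm x.
Proof. by rewrite normE Q_ge0. Qed.

Lemma norm_even x : exists k, E8_norm x = 2 * k.
Proof. by rewrite normE /Q; eexists; rewrite -mulrBr. Qed.

Lemma norm_eq0 x : E8_norm x = 0 -> x = 0.
Proof.
rewrite normE => /Q_eq0 [e0 [e1 [e2 [e3 [e4 [e5 [e6 e7]]]]]]].
apply/matrixP => i j; rewrite !mxE (ord1 i).
case: j => [[|[|[|[|[|[|[|[|//]]]]]]]] Hj]. all: by rewrite -[Ordinal Hj]inord_val /=.
Qed.

Theorem lemmaC2 (h : 'M[int]_8) :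
  E8_isometry h ->
  h ^+ 5 = 1 -> h != 1 ->
  ~~ eigenvalue (map_mx (intr : int -> rat) h) 1 ->
  rootless (image_hm1 h).
Proof.
move=> Hiso H5 _ He v [u ->]; apply/eqP => Hn.
have fix0' := fix0 h He.
pose p k := u *m h ^+ k.
have pSk k : p k.+1 = p k *m h by rewrite /p pS.
have p0 : p 0%N = u by rewrite /p expr0 mulmx1.
have p5 : p 5%N = u by rewrite /p H5 mulmx1.
have iso k l : E8_form (p k.+1) (p l.+1) = E8_form (p k) (p l) by rewrite !pSk Hiso.
set N := E8_form u u.
set A1 := E8_form (p 1%N) u.
set A2 := E8_form (p 2%N) u.
have f11 : E8_form (p 1%N) (p 1%N) = N by rewrite iso p0.
have f22 : E8_form (p 2%N) (p 2%N) = N by rewrite !iso p0.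
have f21 : E8_form (p 2%N) (p 1%N) = A1 by rewrite iso p0.
have f30 : E8_form (p 3%N) u = A2 by rewrite -p5 !iso eformC p0.
have f40 : E8_form (p 4%N) u = A1 by rewrite -p5 !iso eformC p0.
have wfix : (p 0%N + p 1%N + p 2%N + p 3%N + p 4%N) *m h = p 0%N + p 1%N + p 2%N + p 3%N + p 4%N.
  by rewrite !mulmxDl -!pSk p5 p0 addrC !addrA.
have Hsum := fix0' _ wfix.
have Hs : E8_form (p 0%N + p 1%N + p 2%N + p 3%N + p 4%N) u = 0 by rewrite Hsum eform0l.
rewrite !eformDl p0 f30 f40 -/N -/A1 -/A2 in Hs.
have Ev : u *m (h - 1) = p 1%N - p 0%N by rewrite mulmxBr mulmx1 p0 /p expr1.
rewrite Ev in Hn.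
have Hn0 := Hn.
move: Hn; rewrite /E8_norm !eformDl !eformDr !eformNl !eformNr p0 f11 (eformC u (p 1%N)) -/N -/A1 => Hn.
pose x := (p 1%N - p 0%N) - (p 1%N - p 0%N) *m h.
have Ex : x = (p 1%N - p 0%N) - (p 2%N - p 1%N) by rewrite /x mulmxBl -!pSk.
have Nx : E8_norm x = 10 - 5 * N.
  rewrite Ex /E8_norm !(eformDl, eformDr, eformNl, eformNr) p0 f11 f22 f21 (eformC u (p 1%N))
    (eformC u (p 2%N)) (eformC (p 1%N) (p 2%N)) f21 -/N -/A1 -/A2.
  lia.
have Nge := norm_ge0 x; have uge := norm_ge0 u.
have [k Hk] := norm_even u; rewrite /E8_norm -/N in Hk uge.
have : N = 0 \/ N = 2 by lia.
case=> HN.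
  have u0 : u = 0 by apply: norm_eq0; rewrite /E8_norm -/N.
  move: Hn; rewrite /N /A1 /p u0 !eform0l mul0mx eform0l; lia.
have x0 : x = 0 by apply: norm_eq0; lia.
have : (p 1%N - p 0%N) *m h = p 1%N - p 0%N.
  by move: x0; rewrite /x => /eqP; rewrite subr_eq0 => /eqP <-.
move/fix0' => v0.
by move: Hn0; rewrite v0 /E8_norm eform0l.
Qed.
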